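(* Let $q$ be a prime power, $l\ge1$, $t=q^l$, and $L_6=\{\alpha\in GF(t^2):\ \alpha^{t+1}+1\ne0\}=\{\alpha_1,\dots,\alpha_n\}$. For integers $e\ge0$, $s\ge1$ let $R(e,s)\in GF(t^2)^n$ be the row vector with $k$-th entry $\alpha_k^e/(\alpha_k^{t+1}+1)^s$ (with $0^0=1$). Let $f\in\{1,\dots,q-1\}$ and $c\in GF(q)^n$. If $c\cdot R(t-ft/q,\,1)=0$ and $c\cdot R((f-j)t+q-j,\,q-1)=0$ for all $j=1,\dots,f$, then $c\cdot R(ft/q+1,\,1)=0$. (That is, the row $R(ft/q+1,1)$ of the parity-check matrix is obtained, for $q$-ary codes, from the row $R(t-ft/q,1)$ and the auxiliary rows $R((f-j)t+q-j,q-1)$, $j=1,\dots,f$.)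
   Context: Here $u\cdot v=\sum_k u_kv_k$. In the paper these rows belong to parity-check matrices of the $q$-ary Goppa codes $\Gamma(L_6,(x^{t+1}+1)^j)$, which consist of $c\in GF(q)^n$ with $c\cdot R(e,s)=0$ for $1\le s\le j$, $0\le e\le t$. *)

(* Defs.v *)
From mathcomp Require Import all_boot all_algebra.
Set Implicit Arguments. Unset Strict Implicit. Unset Printing Implicit Defensive.
Import GRing.Theory.
Local Open Scope ring_scope.

Definition inL6 (F : finFieldType) (t : nat) (a : F) : bool :=
  a ^+ t.+1 + 1 != 0.

(* The codeword c is indexed by the elements of L6 (a function on F, only its
   values on L6 matter). Note x ^+ 0 = 1, so 0^0 = 1. *)
Definition dotR (F : finFieldType) (t : nat) (c : F -> F) (e s : nat) : F :=
  \sum_(a : F | inL6 t a) c a * a ^+ e / (a ^+ t.+1 + 1) ^+ s.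

Definition over_GFq (F : finFieldType) (t q : nat) (c : F -> F) : Prop :=
  forall a : F, inL6 t a -> c a ^+ q = c a.

(* Main.v *)
Require Import Defs.
From mathcomp Require Import all_boot all_algebra all_field.
From mathcomp Require Import ring zify.
Import GRing.Theory.
Local Open Scope ring_scope.

Section H.
Variables (F : finFieldType) (p : nat).
Hypothesis pr : prime p.
Hypothesis Hch : p \in [pchar F].

Lemma frobD k (x y : F) : (x + y) ^+ (p ^ k) = x ^+ (p ^ k) + y ^+ (p ^ k).
Proof.
apply: exprDn_pchar; rewrite pnatX (eq_pnat _ (pcharf_eq Hch)) pnat_id //.
Qed.

Lemma frob_sum k (P : pred F) (E : F -> F) :
  (\sum_(a | P a) E a) ^+ (p ^ k) = \sum_(a | P a) E a ^+ (p ^ k).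
Proof.
apply: (big_morph (fun x : F => x ^+ (p ^ k))).
  by move=> x y; apply: frobD.
rewrite expr0n; case: eqP => // /eqP; rewrite expn_eq0; case/andP=> /eqP p0; by move: pr; rewrite p0.
Qed.
End H.
Theorem lemma8 (p m l : nat) (F : finFieldType) (f : nat) (c : F -> F) :
  prime p -> (0 < m)%N -> (0 < l)%N ->
  #|F| = (((p ^ m) ^ l) ^ 2)%N ->
  (1 <= f <= p ^ m - 1)%N ->
  over_GFq ((p ^ m) ^ l) (p ^ m) c ->
  dotR ((p ^ m) ^ l) c ((p ^ m) ^ l - f * (p ^ m) ^ l.-1) 1 = 0 ->
  (forall j : nat, (1 <= j <= f)%N ->
     dotR ((p ^ m) ^ l) c ((f - j) * (p ^ m) ^ l + (p ^ m - j)) (p ^ m - 1) = 0) ->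
  dotR ((p ^ m) ^ l) c (f * (p ^ m) ^ l.-1 + 1) 1 = 0.
Proof.
move=> pr m0 l0 card /andP[f1 fq] cq S0 aux.
have Hch : p \in [pchar F].
  have cF : #|F| = (p ^ (m * l * 2))%N.
  by rewrite card -!expnM mulnA.
  exact: (card_finPcharP cF pr).
have q1 : (1 < p ^ m)%N.
  have h : (p ^ 1 <= p ^ m)%N by rewrite leq_pexp2l // prime_gt0.
  have := prime_gt1 pr; rewrite expn1 in h; lia.
set q := (p ^ m)%N in q1 card fq cq S0 aux *.
set t := (q ^ l)%N in card cq S0 aux *.
set t' := (q ^ l.-1)%N in S0 *.
have ht : t = (t' * q)%N by rewrite /t /t' -expnSr prednK.
have Hcard (a : F) : a ^+ (t * t) = a by rewrite mulnn -card expf_card.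
have Hcq k (a : F) : inL6 t a -> c a ^+ (q ^ k) = c a.
  move=> Ha; elim: k => [|k IH]; first by rewrite expr1.
  by rewrite expnSr exprM IH cq.
have htq : (t * q = p ^ (m * l + m))%N by rewrite /t /q -expnM -expnD.
pose SA := \sum_(a : F | inL6 t a) c a * a ^+ (q - f) / (a ^+ t.+1 + 1) ^+ q.
have SB : SA = 0.
  transitivity (dotR t c (t - f * t') 1 ^+ (t * q)); last first.
    by rewrite S0 htq expr0n expn_eq0 (gtn_eqF (prime_gt0 pr)).
  symmetry; rewrite /dotR htq frob_sum // -htq.
  have Hcq' (a : F) : inL6 t a -> c a ^+ (t * q) = c a.
    by move=> Ha; rewrite /t -expnSr Hcq.
  apply: eq_bigr => a Ha.
  rewrite expr_div_n exprMn Hcq' // -exprM expr1.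
  have e1 : (t - f * t' = t' * (q - f))%N by rewrite ht mulnBr (mulnC f).
  have e2 : ((t' * (q - f)) * (t * q) = (t * t) * (q - f))%N.
    rewrite ht; set d := (q - f)%N; nia.
  rewrite e1 e2 exprM Hcard; congr (_ / _).
  rewrite exprM; congr (_ ^+ _).
  have frobt (x y : F) : (x + y) ^+ t = x ^+ t + y ^+ t.
    by rewrite /t /q -expnM frobD.
  by rewrite frobt expr1n -exprM mulSn exprD Hcard exprS mulrC.
suff H : (dotR t c (f * t' + 1) 1) ^+ q = 0.
  by move/eqP: H; rewrite expf_eq0 => /andP[_ /eqP].
have e3 : ((f * t' + 1) * q = t.+1 * f + (q - f))%N.
  rewrite ht; nia.
have SAq : (dotR t c (f * t' + 1) 1) ^+ q = \sum_(a : F | inL6 t a)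
    c a * ((a ^+ t.+1) ^+ f * a ^+ (q - f)) / (a ^+ t.+1 + 1) ^+ q.
  rewrite /dotR /q frob_sum // -/q; apply: eq_bigr => a Ha.
  by rewrite expr_div_n exprMn cq // expr1 -!exprM e3 exprD.
rewrite SAq (eq_bigr (fun a => c a * a ^+ (q - f) / (a ^+ t.+1 + 1) ^+ q * (-1) ^+ f
   + \sum_(i < f) (-1) ^+ i * (c a * a ^+ ((f - i.+1) * t + (q - i.+1))
        / (a ^+ t.+1 + 1) ^+ (q - 1)))).
  rewrite big_split /= -mulr_suml -/SA SB mul0r add0r exchange_big /=.
  apply: big1 => i _; rewrite -mulr_sumr.
  have := aux i.+1; rewrite /dotR => -> //; last by rewrite ltn_ord.
  by rewrite mulr0.
move=> a; rewrite /inL6; set u := a ^+ t.+1; set Nn := u + 1 => Hn.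
have eb (i : 'I_f) : a ^+ ((f - i.+1) * t + (q - i.+1)) = u ^+ (f.-1 - i) * a ^+ (q - f).
  rewrite /u -exprM -exprD; congr (_ ^+ _).
  have i1 := ltn_ord i.
  have -> : (f - i.+1 = f.-1 - i)%N by lia.
  have -> : (q - i.+1 = (f.-1 - i) + (q - f))%N by lia.
  set k := (f.-1 - i)%N; nia.
rewrite (eq_bigr (fun i : 'I_f => (-1) ^+ i * (c a * (u ^+ (f.-1 - i) * a ^+ (q - f)) / Nn ^+ (q - 1)))); last by move=> i _; rewrite eb.
have hu : u ^+ f = (-1) ^+ f + Nn * \sum_(i < f) u ^+ (f.-1 - i) * (-1) ^+ i.
  by have := subrXX u (-1) f; rewrite opprK => <-; rewrite addrC subrK.
rewrite hu.
have -> : \sum_(i < f) (-1) ^+ i * (c a * (u ^+ (f.-1 - i) * a ^+ (q - f)) / Nn ^+ (q - 1))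
   = c a * a ^+ (q - f) / Nn ^+ (q - 1) * \sum_(i < f) u ^+ (f.-1 - i) * (-1) ^+ i.
  by rewrite mulr_sumr; apply: eq_bigr => i _; ring.
set s := \sum_(i < f) _.
have Nq : Nn ^+ q = Nn * Nn ^+ (q - 1) by rewrite -exprS subn1 prednK // ltnW.
rewrite Nq; field.
by rewrite expf_neq0 ?Hn.
Qed.
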